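(* Let $G$ be a signed digraph and let $i\neq j$ be vertices such that $G$ has an arc from $i$ to $j$ and $d^{\mathrm{in}}_G(i)=d^{\mathrm{out}}_G(i)=d^{\mathrm{in}}_G(j)=1$. Let $H$ be the spanning subgraph obtained from $G$ by removing this arc, and let $h:Y\to Y$ be any degree-bounded finite dynamical system on $H$. Then there is no degree-bounded finite dynamical system $f:X\to X$ on $G$ that converges toward $h$ (in any number of steps).
   Context: A finite dynamical system (FDS) with $n$ components is a map $f=(f_1,\dots,f_n):X\to X$ where $X=X_1\times\cdots\times X_n$ and each $X_i$ is a nonempty finite interval of integers; $f^k$ denotes the $k$-fold composition. For FDSs $f:X\to X$ and $h:Y\to Y$ with $n$ components, $f$ converges toward $h$ in $k$ steps if $f^k(X)\subseteq h(Y)\subseteq Y\subseteq X$ and $f(x)=h(x)$ for all $x\in Y$. A signed digraph is a pair $G=(V,E)$ with $E\subseteq V\times V\times\{+,-\}$; $(j,i,s)\in E$ is an arc from $j$ to $i$ of sign $s$ (loops and parallel arcs of opposite sign allowed). The in-degree $d^{\mathrm{in}}_G(i)$ is the number of arcs entering $i$ and the out-degree $d^{\mathrm{out}}_G(i)$ the number of arcs leaving $i$ (positive and negative arcs counted separately). A spanning subgraph has the same vertex set and a subset of the arcs. The interaction graph of an FDS $f$ is the signed digraph on $\{1,\dots,n\}$ with a positive (resp. negative) arc from $j$ to $i$ iff there is $x\in X$ with $x_j<\max(X_j)$ such that $f_i(x+e_j)-f_i(x)$ is positive (resp. negative), $e_j$ the $j$-th unit vector. $f$ is an FDS on $G$ if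 $G$ is its interaction graph. $f$ is degree-bounded if, with $G$ its interaction graph, for every $i$: $|X_i|=2$ if $d^{\mathrm{out}}_G(i)=0<d^{\mathrm{in}}_G(i)$, and $|X_i|\le d^{\mathrm{out}}_G(i)+1$ otherwise. *)

(* Defs.v *)
From mathcomp Require Import all_boot all_order all_algebra.
Set Implicit Arguments. Unset Strict Implicit. Unset Printing Implicit Defensive.
Import Order.TTheory GRing.Theory Num.Theory.
Local Open Scope ring_scope.

(* Components are indexed by 'I_n (i.e. {1,...,n} shifted to {0,...,n-1}).
   The domain X = X_1 x ... x X_n is given by bounds lo, hi with
   X_i = [lo i, hi i] (integer interval, nonempty iff lo i <= hi i).
   An FDS is a map on states that sends X into X (its values outside X
   are irrelevant for every notion below). *)

Definition state (n : nat) := {ffun 'I_n -> int}.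

Definition inX n (lo hi : 'I_n -> int) (x : state n) : Prop :=
  forall i, lo i <= x i <= hi i.

Definition is_FDS n (lo hi : 'I_n -> int) (f : state n -> state n) : Prop :=
  (forall i, lo i <= hi i) /\ (forall x, inX lo hi x -> inX lo hi (f x)).

(* Signed digraph on 'I_n: a set of arcs ((j, i), s) = arc from j to i,
   sign s (true = +, false = -). *)
Definition sdigraph (n : nat) := {set ('I_n * 'I_n * bool)}.

Definition din n (E : sdigraph n) (i : 'I_n) : nat :=
  #|[set a in E | a.1.2 == i]|.
Definition dout n (E : sdigraph n) (i : 'I_n) : nat :=
  #|[set a in E | a.1.1 == i]|.

Definition incr n (x : state n) (j : 'I_n) : state n :=
  [ffun k => x k + (k == j)%:R].

Definition is_interaction_graph n (lo hi : 'I_n -> int)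
    (f : state n -> state n) (E : sdigraph n) : Prop :=
  forall (j i : 'I_n) (s : bool),
    ((j, i, s) \in E) <->
    (exists x : state n, inX lo hi x /\ x j < hi j /\
       (if s then f x i < f (incr x j) i else f (incr x j) i < f x i)).

Definition degree_bound n (lo hi : 'I_n -> int) (E : sdigraph n) : Prop :=
  forall i : 'I_n,
    if (dout E i == 0%N) && (0 < din E i)%N
    then hi i - lo i + 1 = 2
    else hi i - lo i + 1 <= (dout E i).+1%:Z.

Definition degree_bounded_FDS_on n (lo hi : 'I_n -> int)
    (f : state n -> state n) (E : sdigraph n) : Prop :=
  [/\ is_FDS lo hi f, is_interaction_graph lo hi f E & degree_bound lo hi E].

Definition converges_in n (k : nat)
    (loX hiX : 'I_n -> int) (f : state n -> state n)
    (loY hiY : 'I_n -> int) (h : state n -> state n) : Prop :=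
  [/\ (forall x, inX loX hiX x -> exists2 y, inX loY hiY y & iter k f x = h y),
      (forall y, inX loY hiY y -> inX loY hiY (h y)),
      (forall y, inX loY hiY y -> inX loX hiX y) &
      (forall y, inX loY hiY y -> f y = h y)].

(* Main.v *)
Require Import Defs.
From mathcomp Require Import all_boot all_order all_algebra.
From mathcomp Require Import zify.
Import Order.TTheory GRing.Theory Num.Theory.
Local Open Scope ring_scope.

Lemma incr_in n (lo hi : 'I_n -> int) (x : state n) l :
  inX lo hi x -> x l < hi l -> inX lo hi (incr x l).
Proof.
move=> hx hl k; rewrite ffunE; have := hx k.
case: (k =P l) => [->|_] /=; lia.
Qed.

Lemma arith1 (a b c : int) : a - 1 - b + c = a - b + c - 1.
Proof. lia. Qed.

Lemma box_proj n (lo hi : 'I_n -> int) (g : state n -> int) (P : pred 'I_n) :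
  (forall x l, P l -> inX lo hi x -> x l < hi l -> g (incr x l) = g x) ->
  forall x, inX lo hi x -> g x = g [ffun l => if P l then lo l else x l].
Proof.
move=> inv.
suff H : forall m : nat, forall x, inX lo hi x ->
    \sum_(l | P l) (x l - lo l) <= m%:Z ->
    g x = g [ffun l => if P l then lo l else x l].
  move=> x hx; have := lez_abs (\sum_(l | P l) (x l - lo l)); move=> /(H _ x hx); done.
elim=> [|m IH] x hx hs; case: (pickP (fun l => P l && (lo l < x l))) =>
   [l /andP[Pl ltl] | none].
2,4: congr g; apply/ffunP => k; rewrite ffunE; case Pk: (P k) => //;
  have := none k; rewrite Pk /= => /negbT; have := hx k;
  move=> /andP[a _]; rewrite -leNgt => b; apply: le_anti; rewrite a b //.
all: set x' : state n := [ffun k => x k - (k == l)%:R].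
all: have hx' : inX lo hi x' by move=> k; rewrite ffunE; have := hx k;
  case: (k =P l) => [->|_] /=; lia.
all: have ex : incr x' l = x by apply/ffunP => k; rewrite !ffunE;
  case: (k =P l) => _ /=; lia.
all: have sum' : \sum_(k | P k) (x' k - lo k) = \sum_(k | P k) (x k - lo k) - 1
  by rewrite (bigD1 l) //= [in RHS](bigD1 l) //= ffunE eqxx /=
       (eq_bigr (fun k => x k - lo k)) => [|k /andP[_ nk]];
     [apply: arith1 | by rewrite ffunE (negbTE nk) /= subr0].
all: have s0 : 0 <= \sum_(k | P k) (x' k - lo k)
  by apply: sumr_ge0 => k _; have := hx' k; lia.
- lia.
- have hl' : x' l < hi l by have := hx l; rewrite ffunE eqxx /=; lia.
  rewrite -ex (inv x' l Pl hx' hl') IH //; last by lia.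
  congr g; apply/ffunP => k; rewrite !ffunE; case Pk: (P k) => //.
  case: (k =P l) => [e|_] /=; [by rewrite e Pl in Pk | lia].
Qed.

Theorem mainTheorem4 (n : nat) (E : sdigraph n) (i j : 'I_n) (s : bool) :
  i != j ->
  (i, j, s) \in E ->
  din E i = 1%N -> dout E i = 1%N -> din E j = 1%N ->
  forall (loY hiY : 'I_n -> int) (h : state n -> state n),
    degree_bounded_FDS_on loY hiY h (E :\ (i, j, s)) ->
    ~ exists (loX hiX : 'I_n -> int) (f : state n -> state n) (k : nat),
        degree_bounded_FDS_on loX hiX f E /\
        converges_in k loX hiX f loY hiY h.
Proof.
move=> nij ijE dini douti dinj loY hiY h [[hY1 hY2] hYig hYdb]
  [loX [hiX [f [k [[[fX1 fX2] fXig fXdb] [_ _ YX fh]]]]]].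
have inj_only : forall l s', (l, j, s') \in E -> (l, j, s') = (i, j, s).
  move: dinj; rewrite /din => /eqP/cards1P [a0 A0] l s' lE.
  have m1 : (i, j, s) \in [set a in E | a.1.2 == j] by rewrite inE ijE eqxx.
  have m2 : (l, j, s') \in [set a in E | a.1.2 == j] by rewrite inE lE eqxx.
  by rewrite A0 in m1 m2; move/set1P: m1 => ->; move/set1P: m2 => ->.
have hinv : forall y l, predT l -> inX loY hiY y -> y l < hiY l ->
    h (incr y l) j = h y j.
  move=> y l _ hy hl; case: (ltgtP (h y j) (h (incr y l) j)) => [c|c|c //].
  - have : (l, j, true) \in E :\ (i, j, s) by apply/(hYig l j true); exists y.
    by rewrite !inE => /andP[ne /inj_only e]; rewrite e eqxx in ne.
  - have : (l, j, false) \in E :\ (i, j, s) by apply/(hYig l j false); exists y.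
    by rewrite !inE => /andP[ne /inj_only e]; rewrite e eqxx in ne.
set c := h [ffun l => loY l] j.
have hconst : forall y, inX loY hiY y -> h y j = c.
  move=> y hy; rewrite (@box_proj _ _ _ (fun y => h y j) predT hinv y hy).
  by rewrite /c; congr (h _ j); apply/ffunP => l; rewrite !ffunE.
have finv : forall x l, (fun l => l != i) l -> inX loX hiX x -> x l < hiX l ->
    f (incr x l) j = f x j.
  move=> x l /= nli hx hl; case: (ltgtP (f x j) (f (incr x l) j)) => [c'|c'|c' //].
  - have : (l, j, true) \in E by apply/(fXig l j true); exists x.
    by move/inj_only => [e]; rewrite e eqxx in nli.
  - have : (l, j, false) \in E by apply/(fXig l j false); exists x.
    by move/inj_only => [e]; rewrite e eqxx in nli.
have bl : forall l, loX l <= loY l.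
  move=> l; have hy : inX loY hiY [ffun l => loY l].
    by move=> m; rewrite ffunE hY1 lexx.
  by have := YX _ hy l; rewrite ffunE => /andP[].
have bh : forall l, hiY l <= hiX l.
  move=> l; have hy : inX loY hiY [ffun l => hiY l].
    by move=> m; rewrite ffunE hY1 lexx.
  by have := YX _ hy l; rewrite ffunE => /andP[].
have Hdout : #|[set a in E :\ (i, j, s) | a.1.1 == i]| = 0%N.
  have eS : [set a in E :\ (i, j, s) | a.1.1 == i] =
      [set a in E | a.1.1 == i] :\ (i, j, s).
    by apply/setP => a; rewrite !inE andbA.
  have := cardsD1 (i, j, s) [set a in E | a.1.1 == i].
  rewrite eS inE ijE eqxx; move: douti; rewrite /dout => -> /=.
  by case=> /esym.
have Hdin : #|[set a in E :\ (i, j, s) | a.1.2 == i]| = 1%N.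
  rewrite -dini /din; apply: eq_card => a; rewrite !inE.
  case: (a =P (i, j, s)) => [->|] //=.
  by rewrite eq_sym (negbTE nij) andbF.
have Yi : hiY i - loY i + 1 = 2.
  by have := hYdb i; rewrite /dout /din Hdout Hdin.
have Xi : hiX i - loX i + 1 <= 2.
  by have := fXdb i; rewrite douti.
have eloi : loY i = loX i by have := bl i; have := bh i; lia.
have ehii : hiY i = hiX i by have := bl i; have := bh i; lia.
have fconst : forall x, inX loX hiX x -> f x j = c.
  move=> x hx; set z : state n := [ffun l => if l != i then loY l else x l].
  have hzY : inX loY hiY z.
    move=> l; rewrite ffunE; case: (l =P i) => [->|_] /=.
      by rewrite eloi ehii; apply: hx.
    by rewrite lexx hY1.
  have hz : inX loX hiX z.
    move=> l; have := hzY l; have := bl l; have := bh l; lia.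
  have e : [ffun l => if l != i then loX l else x l] =
           [ffun l => if l != i then loX l else z l].
    by apply/ffunP => l; rewrite !ffunE; case: (l =P i) => [->|] //=; rewrite ffunE eqxx.
  rewrite (@box_proj _ _ _ (fun x => f x j) (fun l => l != i) finv x hx) e.
  rewrite -(@box_proj _ _ _ (fun x => f x j) (fun l => l != i) finv z hz).
  by rewrite fh // hconst.
have [x [hx [hl Hs]]] := proj1 (fXig i j s) ijE.
have hx' := @incr_in _ _ _ x i hx hl.
move: Hs; rewrite !fconst //.
by case: ifP => _; rewrite ltxx.
Qed.
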